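(* Let $p$ be a prime and $\Gamma_p=T^{p-1}\rtimes_\rho C_p$. Then: (1) for every $t\in T^{p-1}$ the element $ta$ has order $p$, and the subgroup $\langle ta\rangle$ is conjugate in $\Gamma_p$ to $C_p=\langle a\rangle$; (2) the centre of $\Gamma_p$ is $Z(\Gamma_p)=\langle(\xi_p,\xi_p^2,\dots,\xi_p^{p-1})\rangle\le T^{p-1}$, where $\xi_p=e^{2\pi\sqrt{-1}/p}$; (3) the normaliser of $C_p$ in $\Gamma_p$ is $N_{\Gamma_p}(C_p)=Z(\Gamma_p)\times C_p$.
   Context: Let $a$ be a fixed generator of $C_p$. $\Gamma_p=T^{p-1}\rtimes_\rho C_p$ is the semidirect product in which $a t a^{-1}=\rho(a)(t)$, where for $t=(t_1,\dots,t_{p-1})\in T^{p-1}$, $\rho(a)(t)=(t_{p-1}^{-1},\,t_1t_{p-1}^{-1},\,t_2t_{p-1}^{-1},\dots,t_{p-2}t_{p-1}^{-1})$. *)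

(* Defs.v *)
From HB Require Import structures.
From mathcomp Require Import all_boot all_order all_algebra.
From mathcomp Require Import complex.
From mathcomp Require Import reals trigo.
Set Implicit Arguments. Unset Strict Implicit. Unset Printing Implicit Defensive.
Import Order.TTheory GRing.Theory Num.Theory.
Local Open Scope ring_scope.

(* Elements of T^(n) are n-tuples of complex numbers of modulus 1. *)
Definition inT (R : realType) (z : R[i]) : bool := `|z| == 1.

Definition tmul (R : realType) n (t s : n.-tuple R[i]) : n.-tuple R[i] :=
  [tuple t`_i * s`_i | i < n].
Definition tinv (R : realType) n (t : n.-tuple R[i]) : n.-tuple R[i] :=
  [tuple (t`_i)^-1 | i < n].
Definition tone (R : realType) n : n.-tuple R[i] := [tuple 1 | i < n].

(* rho(a)(t_1,...,t_n) = (t_n^-1, t_1 t_n^-1, ..., t_{n-1} t_n^-1)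
   (0-based: component 0 is t_n^-1, component i>0 is t_{i-1} * t_n^-1). *)
Definition rho (R : realType) n (t : n.-tuple R[i]) : n.-tuple R[i] :=
  [tuple (if val i == 0%N then 1 else t`_(val i).-1) / last 1 t | i < n].

(* Gamma_p = T^(p-1) x|_rho C_p : an element t a^k is encoded as (t, k) with
   0 <= k < p; (t, k) (s, m) = (t * rho^k(s), (k + m) mod p). *)
Definition elt (R : realType) (p : nat) := ((p.-1).-tuple R[i] * nat)%type.

Definition inGamma (R : realType) p (x : elt R p) : Prop :=
  (x.2 < p)%N /\ all (@inT R) x.1.

Definition gmul (R : realType) p (x y : elt R p) : elt R p :=
  (tmul x.1 (iter x.2 (@rho R _) y.1), ((x.2 + y.2) %% p)%N).

Definition gone (R : realType) p : elt R p := (tone R _, 0%N).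

(* inverse: (t a^k)^-1 = a^-k t^-1 = rho^(p-k)(t^-1) a^(p-k) *)
Definition ginv (R : realType) p (x : elt R p) : elt R p :=
  (iter (p - x.2) (@rho R _) (tinv x.1), ((p - x.2) %% p)%N).

Definition gpow (R : realType) p (x : elt R p) (m : nat) : elt R p :=
  iter m (gmul x) (gone R p).

Definition gen_a (R : realType) p : elt R p := (tone R _, 1%N).
Definition emb (R : realType) p (t : (p.-1).-tuple R[i]) : elt R p := (t, 0%N).

Definition has_order (R : realType) p (x : elt R p) (n : nat) : Prop :=
  (0 < n)%N /\ gpow x n = gone R p /\
  (forall m, (0 < m < n)%N -> gpow x m <> gone R p).

Definition cyc (R : realType) p (x : elt R p) : elt R p -> Prop :=
  fun y => exists m, y = gpow x m \/ y = gpow (ginv x) m.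

Definition conjset (R : realType) p (g : elt R p) (H : elt R p -> Prop)
  : elt R p -> Prop :=
  fun y => exists2 x, H x & y = gmul (gmul g x) (ginv g).

Definition centre (R : realType) p : elt R p -> Prop :=
  fun x => inGamma x /\ forall y, inGamma y -> gmul x y = gmul y x.

Definition normaliser (R : realType) p (H : elt R p -> Prop) : elt R p -> Prop :=
  fun g => inGamma g /\ forall y, conjset g H y <-> H y.

Definition xi (R : realType) (p : nat) : R[i] :=
  Complex (cos (2 * pi / p%:R)) (sin (2 * pi / p%:R)).

Definition zeta (R : realType) p : elt R p :=
  emb [tuple (xi R p) ^+ (val i).+1 | i < p.-1].

(* Main.v *)
Require Import Defs.
From HB Require Import structures.
From mathcomp Require Import all_boot all_order all_algebra.
From mathcomp Require Import complex.
From mathcomp Require Import reals trigo.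
From mathcomp Require Import ring lra zify.
Import Order.TTheory GRing.Theory Num.Theory.
Local Open Scope ring_scope.
Set Implicit Arguments. Unset Strict Implicit. Unset Printing Implicit Defensive.

Lemma nth_mk (C : Type) (x0 : C) n (F : 'I_n -> C) j (hj : (j < n)%N) :
  nth x0 [tuple F i | i < n] j = F (Ordinal hj).
Proof. by rewrite -(tnth_nth x0 _ (Ordinal hj)) tnth_mktuple. Qed.

Lemma tuple_ext (C : Type) (x0 : C) n (t s : n.-tuple C) :
  (forall j, (j < n)%N -> nth x0 t j = nth x0 s j) -> t = s.
Proof.
move=> h; apply: val_inj; apply: (@eq_from_nth _ x0); first by rewrite !size_tuple.
by move=> j; rewrite size_tuple; apply: h.
Qed.


Section X.
Variable R : realType.
Variable p : nat.
Hypothesis hp : prime p.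
Local Notation C := R[i].
Local Notation tup := ((p.-1).-tuple R[i]).
Implicit Types t s r : tup.

Lemma p_gt1 : (1 < p)%N. Proof. exact: prime_gt1. Qed.
Lemma p_gt0 : (0 < p)%N. Proof. exact: prime_gt0. Qed.

Lemma nth_tmul (t s : tup) j : (j < p.-1)%N -> (tmul t s)`_j = t`_j * s`_j.
Proof. by move=> hj; rewrite /tmul (nth_mk _ _ hj). Qed.
Lemma nth_tinv (t : tup) j : (j < p.-1)%N -> (tinv t)`_j = (t`_j)^-1.
Proof. by move=> hj; rewrite /tinv (nth_mk _ _ hj). Qed.
Lemma nth_tone j : (j < p.-1)%N -> (tone R p.-1)`_j = 1.
Proof. by move=> hj; rewrite /tone (nth_mk _ _ hj). Qed.
Lemma last_tup (t : tup) : last 1 t = t`_(p.-2).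
Proof.
have h1 := p_gt1.
have : size t = (p.-2).+1 by rewrite size_tuple; lia.
move: (tval t) => s hs.
by rewrite (last_nth 1) hs /= (set_nth_default 0) // hs.
Qed.
Lemma nth_rho (t : tup) j : (j < p.-1)%N ->
  (rho t)`_j = (if j == 0%N then 1 else t`_j.-1) / t`_(p.-2).
Proof. by move=> hj; rewrite /rho (nth_mk _ _ hj) last_tup. Qed.

Definition U (t : tup) (k : nat) : C :=
  if (k %% p == 0)%N then 1 else t`_((k %% p).-1).

Lemma Umod t k : U t (k %% p) = U t k.
Proof. by rewrite /U modn_mod. Qed.
Lemma Umodeq t k l : (k = l %[mod p])%N -> U t k = U t l.
Proof. by move=> h; rewrite -Umod h Umod. Qed.
Lemma Unth t j : (j < p.-1)%N -> U t j.+1 = t`_j.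
Proof.
move=> hj; have h1 := p_gt1.
rewrite /U modn_small //; lia.
Qed.
Lemma U0 t : U t 0 = 1. Proof. by rewrite /U mod0n. Qed.

Lemma tup_ext (t s : tup) : (forall k, U t k = U s k) -> t = s.
Proof. move=> h; apply: (@tuple_ext _ 0) => j hj; by rewrite -!Unth // h. Qed.

Definition nz (t : tup) := forall k, U t k != 0.

Lemma Utmul t s k : U (tmul t s) k = U t k * U s k.
Proof.
rewrite /U; case: ifP => h; first by rewrite mulr1.
apply: nth_tmul; have := ltn_pmod k p_gt0; have := p_gt1; move/negbT: h; lia.
Qed.
Lemma Utinv t k : U (tinv t) k = (U t k)^-1.
Proof.
rewrite /U; case: ifP => h; first by rewrite invr1.
apply: nth_tinv; have := ltn_pmod k p_gt0; have := p_gt1; move/negbT: h; lia.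
Qed.
Lemma Utone k : U (tone R p.-1) k = 1.
Proof.
rewrite /U; case: ifP => h //.
apply: nth_tone; have := ltn_pmod k p_gt0; have := p_gt1; move/negbT: h; lia.
Qed.

Lemma Urho t k : nz t -> U (rho t) k = U t (k + p.-1) / U t p.-1.
Proof.
move=> hz; have h1 := p_gt1; have h0 := p_gt0.
have hl : U t p.-1 = t`_(p.-2).
  by rewrite -Unth; [congr U; lia | lia].
rewrite [LHS]/U; case: ifP => hk.
  rewrite -/(U t (k + p.-1)) -/(U t p.-1).
  rewrite (@Umodeq t (k + p.-1) p.-1) ?divff //.
  by rewrite -modnDml (eqP hk).
have hk1 := ltn_pmod k h0.
have hk' : (0 < k %% p)%N.
  move/negbT: hk. rewrite lt0n. exact: id.
rewrite nth_rho; last lia.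
rewrite -/(U t p.-1) hl; congr (_ / _).
rewrite [U t (k + p.-1)]/U.
have -> : ((k + p.-1) %% p = (k %% p).-1)%N.
  rewrite -modnDml -(@modn_small ((k %% p).-1)%N p); last lia.
  have -> : (k %% p + p.-1 = p + (k %% p).-1)%N by lia.
  by rewrite modnDl.
by case: (k %% p)%N hk' => [|[|m]] //= _; rewrite ?eqxx //.
Qed.

Lemma nz_tone : nz (tone R p.-1). Proof. by move=> k; rewrite Utone oner_eq0. Qed.
Lemma nz_tmul t s : nz t -> nz s -> nz (tmul t s).
Proof. by move=> ht hs k; rewrite Utmul mulf_neq0. Qed.
Lemma nz_tinv t : nz t -> nz (tinv t).
Proof. by move=> ht k; rewrite Utinv invr_eq0. Qed.
Lemma nz_rho t : nz t -> nz (rho t).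
Proof. by move=> ht k; rewrite Urho // mulf_neq0 ?invr_eq0. Qed.
Lemma nz_iter k t : nz t -> nz (iter k (@rho R _) t).
Proof. by move=> ht; elim: k => //= k IH; apply: nz_rho. Qed.

Lemma Uiter k t i : nz t ->
  U (iter k (@rho R _) t) i = U t (i + p.-1 * k) / U t (p.-1 * k).
Proof.
move=> ht; elim: k i => [|k IH] i.
  by rewrite /= muln0 addn0 U0 divr1.
rewrite iterS Urho; last exact: nz_iter.
rewrite !IH.
have e1 : (i + p.-1 + p.-1 * k = i + p.-1 * k.+1)%N by rewrite mulnS; lia.
have e2 : (p.-1 + p.-1 * k = p.-1 * k.+1)%N by rewrite mulnS.
rewrite e1 e2; have := ht (p.-1 * k)%N; have := ht (p.-1 * k.+1)%N.
move=> a b; field; rewrite b a //.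
Qed.

Lemma iter_p t : nz t -> iter p (@rho R _) t = t.
Proof.
move=> ht; apply: tup_ext => i; rewrite Uiter //.
have -> : U t (p.-1 * p) = 1 by rewrite -Umod modnMl U0.
by rewrite divr1; apply: Umodeq; rewrite addnC modnMDl.
Qed.

Lemma iter_mulp q t : nz t -> iter (q * p) (@rho R _) t = t.
Proof.
move=> ht; elim: q => [|q IH] //=.
by rewrite mulSn iterD IH iter_p.
Qed.

Lemma iter_mod k t : nz t -> iter (k %% p) (@rho R _) t = iter k (@rho R _) t.
Proof.
move=> ht; rewrite {2}(divn_eq k p) addnC iterD iter_mulp //.
Qed.

Lemma rho_tmul t s : nz t -> nz s -> rho (tmul t s) = tmul (rho t) (rho s).
Proof.
move=> ht hs; apply: tup_ext => k.
rewrite Urho; last exact: nz_tmul.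
rewrite !Utmul !Urho //.
have := ht p.-1; have := hs p.-1 => a b; field; rewrite a b //.
Qed.
Lemma iter_tmul k t s : nz t -> nz s ->
  iter k (@rho R _) (tmul t s) = tmul (iter k (@rho R _) t) (iter k (@rho R _) s).
Proof.
move=> ht hs; elim: k => //= k ->; rewrite rho_tmul //; exact: nz_iter.
Qed.
Lemma rho_tinv t : nz t -> rho (tinv t) = tinv (rho t).
Proof.
move=> ht; apply: tup_ext => k.
rewrite Urho; last exact: nz_tinv.
rewrite !Utinv !Urho //.
have := ht p.-1; have := ht (k + p.-1)%N => a b; field; rewrite a b //.
Qed.
Lemma iter_tinv k t : nz t ->
  iter k (@rho R _) (tinv t) = tinv (iter k (@rho R _) t).
Proof.
move=> ht; elim: k => //= k ->; rewrite rho_tinv //; exact: nz_iter.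
Qed.
Lemma rho_tone : rho (tone R p.-1) = tone R p.-1.
Proof.
apply: tup_ext => k; rewrite Urho; last exact: nz_tone.
by rewrite !Utone divr1.
Qed.
Lemma iter_tone k : iter k (@rho R _) (tone R p.-1) = tone R p.-1.
Proof. by elim: k => //= k ->; rewrite rho_tone. Qed.

Lemma tmulA t s r : tmul t (tmul s r) = tmul (tmul t s) r.
Proof. by apply: tup_ext => k; rewrite !Utmul mulrA. Qed.
Lemma tmulC t s : tmul t s = tmul s t.
Proof. by apply: tup_ext => k; rewrite !Utmul mulrC. Qed.
Lemma tmul1 t : tmul t (tone R p.-1) = t.
Proof. by apply: tup_ext => k; rewrite !Utmul Utone mulr1. Qed.
Lemma tmul1l t : tmul (tone R p.-1) t = t.
Proof. by rewrite tmulC tmul1. Qed.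
Lemma tmulV t : nz t -> tmul t (tinv t) = tone R p.-1.
Proof. by move=> ht; apply: tup_ext => k; rewrite !Utmul Utinv Utone divff. Qed.
Lemma tmulVl t : nz t -> tmul (tinv t) t = tone R p.-1.
Proof. by move=> ht; rewrite tmulC tmulV. Qed.
Lemma tinvM t s : tinv (tmul t s) = tmul (tinv t) (tinv s).
Proof. by apply: tup_ext => k; rewrite !Utmul !Utinv Utmul invfM. Qed.
Lemma tinvK t : tinv (tinv t) = t.
Proof. by apply: tup_ext => k; rewrite !Utinv invrK. Qed.

Local Notation E := (elt R p).
Implicit Types x y z g : E.
Definition good x := (x.2 < p)%N /\ nz x.1.

Lemma pairE (A B : Type) (a a' : A) (b b' : B) : a = a' -> b = b' -> (a, b) = (a', b').
Proof. by move=> -> ->. Qed.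

Lemma gmulA x y z : nz y.1 -> nz z.1 -> gmul (gmul x y) z = gmul x (gmul y z).
Proof.
case: x => t k; case: y => s m; case: z => r l /= hs hr.
rewrite /gmul /=; apply: pairE.
  rewrite iter_tmul; [|done|exact: nz_iter].

  rewrite (iter_mod (k+m) hr) -iterD tmulA //.
by rewrite modnDml modnDmr addnA.
Qed.

Lemma gmul1 x : (x.2 < p)%N -> gmul (gone R p) x = x.
Proof.
case: x => t k /= hk; rewrite /gmul /=; apply: pairE.
  by rewrite tmul1l.
by rewrite add0n modn_small.
Qed.
Lemma gmulx1 x : (x.2 < p)%N -> gmul x (gone R p) = x.
Proof.
case: x => t k /= hk; rewrite /gmul /=; apply: pairE.
  by rewrite iter_tone tmul1.
by rewrite addn0 modn_small.
Qed.
Lemma gmulV x : good x -> gmul x (ginv x) = gone R p.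
Proof.
case: x => t k [/= hk ht]; rewrite /gmul /ginv /=; apply: pairE.
  rewrite -iterD subnKC ?iter_p ?tmulV //; [exact: nz_tinv | exact: ltnW].
by rewrite modnDmr subnKC ?modnn // ltnW.
Qed.
Lemma gmulVl x : good x -> gmul (ginv x) x = gone R p.
Proof.
case: x => t k [/= hk ht]; rewrite /gmul /ginv /=; apply: pairE.
  rewrite iter_mod // iter_tinv // tmulVl //; exact: nz_iter.
by rewrite modnDml subnK ?modnn // ltnW.
Qed.
Lemma good_mul x y : good x -> good y -> good (gmul x y).
Proof.
case: x => t k; case: y => s m [/= hk ht] [/= hm hs]; split => /=.
  exact: ltn_pmod p_gt0.
by apply: nz_tmul => //; apply: nz_iter.
Qed.
Lemma good_inv x : good x -> good (ginv x).
Proof.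
case: x => t k [/= hk ht]; split => /=.
  exact: ltn_pmod p_gt0.
by apply: nz_iter; apply: nz_tinv.
Qed.
Lemma good_one : good (gone R p).
Proof. split; [exact: p_gt0 | exact: nz_tone]. Qed.
Lemma good_pow x m : good x -> good (gpow x m).
Proof. by move=> hx; elim: m => [|m IH] /=; [exact: good_one | exact: good_mul]. Qed.

Lemma inv_uniq u v : good u -> good v -> gmul u v = gone R p -> v = ginv u.
Proof.
move=> hu hv h.
rewrite -(gmul1 (proj1 hv)) -(gmulVl hu) gmulA; last by case: hv.
  by rewrite h gmulx1 //; case: (good_inv hu).
by case: hu.
Qed.

Definition cj g y := gmul (gmul g y) (ginv g).

Lemma good_nz x : good x -> nz x.1. Proof. by case. Qed.
Lemma good_lt x : good x -> (x.2 < p)%N. Proof. by case. Qed.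

Ltac gd := repeat first [ assumption | apply: good_nz | apply: good_lt
  | apply: good_mul | apply: good_inv | apply: good_pow | apply: good_one ].

Lemma gmulKl g w : good g -> good w -> gmul (ginv g) (gmul g w) = w.
Proof.
move=> hg hw; rewrite -gmulA; [|gd|gd].
by rewrite gmulVl // gmul1 //; gd.
Qed.

Lemma cjM g y z : good g -> good y -> good z -> cj g (gmul y z) = gmul (cj g y) (cj g z).
Proof.
move=> hg hy hz; rewrite /cj.
rewrite gmulA; [|gd|gd]. rewrite gmulA; [|gd|gd].
rewrite gmulA; [|gd|gd]. rewrite gmulA; [|gd|gd].
rewrite [gmul (gmul g z) _]gmulA; [|gd|gd].
by rewrite gmulKl //; gd.
Qed.

Lemma cj1 g : good g -> cj g (gone R p) = gone R p.
Proof. by move=> hg; rewrite /cj gmulx1 ?gmulV //; gd. Qed.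

Lemma good_cj g y : good g -> good y -> good (cj g y).
Proof. by move=> *; rewrite /cj; gd. Qed.

Lemma cj_pow g y m : good g -> good y -> cj g (gpow y m) = gpow (cj g y) m.
Proof.
move=> hg hy; elim: m => [|m IH] /=; first exact: cj1.
by rewrite cjM ?IH //; gd.
Qed.

Lemma cj_inv g y : good g -> good y -> cj g (ginv y) = ginv (cj g y).
Proof.
move=> hg hy; apply: inv_uniq; try (apply: good_cj; gd).
by rewrite -cjM ?gmulV ?cj1 //; gd.
Qed.

Lemma cj_eq1 g u : good g -> good u -> cj g u = gone R p -> u = gone R p.
Proof.
move=> hg hu h.
have : gmul (cj g u) g = gmul g u.
  rewrite /cj gmulA; [|gd|gd]. by rewrite gmulVl // gmulx1 //; gd.
rewrite h gmul1; last gd.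
move=> e; have := gmulKl hg hu; rewrite -e gmulVl //.
Qed.

Lemma norm1_pow (w : C) n : (0 < n)%N -> w ^+ n = 1 -> `|w| = 1.
Proof.
move=> hn hw; apply/eqP; rewrite -(pexpr_eq1 hn) ?normr_ge0 //.
by rewrite -normrX hw normr1.
Qed.

Lemma allT_nth t j : all (@inT R) t -> (j < p.-1)%N -> `|t`_j| = 1.
Proof.
move=> /(all_nthP 0) h hj; apply/eqP; apply: h; by rewrite size_tuple.
Qed.

Lemma allT_nz t : all (@inT R) t -> nz t.
Proof.
move=> h k; rewrite /U; case: ifP => hk; first exact: oner_neq0.
have hj : ((k %% p).-1 < p.-1)%N.
  have := ltn_pmod k p_gt0; move/negbT: hk; lia.
by rewrite -normr_eq0 (allT_nth h hj) oner_neq0.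
Qed.

Lemma allT_of t : (forall j, (j < p.-1)%N -> `|t`_j| = 1) -> all (@inT R) t.
Proof.
move=> h; apply/(all_nthP 0) => j; rewrite size_tuple => hj.
by rewrite /inT h.
Qed.

Lemma allT_tone : all (@inT R) (tone R p.-1).
Proof. by apply: allT_of => j hj; rewrite nth_tone // normr1. Qed.

Lemma inGamma_good x : inGamma x -> good x.
Proof. by case=> h1 h2; split => //; apply: allT_nz. Qed.

Lemma gpow_tone j m : gpow (tone R p.-1, j) m = (tone R p.-1, (j * m) %% p)%N.
Proof.
elim: m => [|m IH] /=; first by rewrite muln0 mod0n.
rewrite IH /gmul /=; apply: pairE.
  by rewrite iter_tone tmul1.
by rewrite modnDmr mulnS.
Qed.

Lemma tinv_tone : tinv (tone R p.-1) = tone R p.-1.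
Proof. by apply: tup_ext => k; rewrite Utinv Utone invr1. Qed.

Lemma ginv_tone j : ginv (tone R p.-1, j) = (tone R p.-1, (p - j) %% p)%N.
Proof. by rewrite /ginv /= tinv_tone iter_tone. Qed.

Lemma cyc_aP y : cyc (gen_a R p) y <-> exists2 k, (k < p)%N & y = (tone R p.-1, k).
Proof.
split.
  case=> m [->|->]; first by rewrite /gen_a gpow_tone; exists ((1 * m) %% p)%N => //; exact: ltn_pmod p_gt0.
  rewrite /gen_a ginv_tone gpow_tone; exists (((p - 1) %% p * m) %% p)%N => //; exact: ltn_pmod p_gt0.
case=> k hk ->; exists k; left; by rewrite /gen_a gpow_tone mul1n modn_small.
Qed.

Lemma inGamma_a : inGamma (gen_a R p).
Proof. split; [exact: p_gt1 | exact: allT_tone]. Qed.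

Lemma gpow_snd x m : ((gpow x m).2 = (x.2 * m) %% p)%N.
Proof.
elim: m => [|m IH] /=; first by rewrite muln0 mod0n.
by rewrite IH modnDmr mulnS.
Qed.

Lemma x_ta t : gmul (emb t) (gen_a R p) = (t, 1%N).
Proof.
rewrite /gmul /emb /gen_a /=; apply: pairE; first by rewrite tmul1.
by rewrite modn_small //; exact: p_gt1.
Qed.

Lemma exists_s t : all (@inT R) t -> exists s, all (@inT R) s /\ rho s = tmul s t.
Proof.
move=> ht.
have h1 := p_gt1.
have tnz : forall j, (j < p.-1)%N -> t`_j != 0.
  by move=> j hj; rewrite -normr_eq0 (allT_nth ht hj) oner_neq0.
pose M := \prod_(j < p.-1) t`_j.
have nM : `|M| = 1.
  rewrite /M normr_prod; apply: big1 => j _; exact: allT_nth.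
have M0 : M != 0 by rewrite -normr_eq0 nM oner_neq0.
pose c := p.-root (M^-1).
have hc : c ^+ p = M^-1 by rewrite /c rootCK //; exact: p_gt0.
have nc : `|c| = 1.
  apply/eqP; rewrite -(pexpr_eq1 p_gt0) ?normr_ge0 //.
  by rewrite -normrX hc normfV nM invr1.
have c0 : c != 0 by rewrite -normr_eq0 nc oner_neq0.
pose P k := \prod_(j < k) t`_j.
have P0 : forall k, (k <= p.-1)%N -> P k != 0.
  move=> k hk; rewrite /P; apply/prodf_neq0 => j _; apply: tnz; exact: leq_trans (ltn_ord j) hk.
pose s := [tuple (c ^+ (val k).+1 * P (val k).+1)^-1 | k < p.-1].
have ns : forall j (hj : (j < p.-1)%N), s`_j = (c ^+ j.+1 * P j.+1)^-1.
  by move=> j hj; rewrite /s (nth_mk _ _ hj).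
exists s; split.
  apply: allT_of => j hj; rewrite ns // normfV normrM normrX nc expr1n mul1r.
  rewrite /P normr_prod big1 ?invr1 // => i _.
  apply: allT_nth => //; exact: leq_trans (ltn_ord i) hj.
apply: (@tuple_ext _ 0) => j hj.
have hl : s`_(p.-2) = c.
  rewrite ns; last lia.
  have -> : (p.-2).+1 = p.-1 by lia.
  have e : c ^+ p = c * c ^+ p.-1 by rewrite -exprS; congr (_ ^+ _); lia.
  have : c * (c ^+ p.-1 * P p.-1) = 1 by rewrite mulrA -e hc /P -/M mulVf.
  move=> h; apply: (@mulfI _ (c ^+ p.-1 * P p.-1)).
    by rewrite mulf_neq0 ?expf_neq0 // P0.
  by rewrite divff ?mulf_neq0 ?expf_neq0 ?P0 // mulrC h.
rewrite nth_rho // nth_tmul // hl.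
case: j hj => [|j] hj.
  rewrite eqxx (ns 0%N hj) /P big_ord1 expr1; have := tnz 0%N hj => h0.
  have -> : t`_(@ord0 (p.-2)) = t`_0 by [].
  by rewrite invfM -mulrA mulVf // mulr1 mul1r.
have -> : (j.+1 == 0%N) = false by [].
rewrite (ns j.+1 hj) (ns j); last lia.
have eP : P j.+2 = P j.+1 * t`_j.+1 by rewrite /P big_ord_recr.
rewrite eP [c ^+ j.+2]exprS.
have := tnz j.+1 hj; have := P0 j.+1 (ltnW hj) => a b; field.
by rewrite a b c0 expf_neq0.
Qed.

Lemma cj_s t s : nz t -> nz s -> rho s = tmul s t -> cj (emb s) (t, 1%N) = gen_a R p.
Proof.
move=> ht hs e; rewrite /cj /gmul /ginv /emb /gen_a /=; apply: pairE.
  rewrite subn0 iter_p; last exact: nz_tinv.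
  rewrite add0n modn_small; last exact: p_gt1.
  by rewrite /= rho_tinv // e tmulV //; apply: nz_tmul.
by rewrite add0n subn0 modnn addn0 !modn_small //; exact: p_gt1.
Qed.

Lemma part1 t : all (@inT R) t ->
     has_order (gmul (emb t) (gen_a R p)) p /\
     exists2 g, inGamma g &
       forall y, conjset g (cyc (gmul (emb t) (gen_a R p))) y <-> cyc (gen_a R p) y.
Proof.
move=> ht; rewrite x_ta.
have [s [hs e]] := exists_s ht.
have hx : good (t, 1%N) by split; [exact: p_gt1 | exact: allT_nz].
have hg : good (emb s) by split; [exact: p_gt0 | exact: allT_nz].
have ecj := cj_s (allT_nz ht) (allT_nz hs) e.
split.
  split; first exact: p_gt0.
  split.
    apply: (cj_eq1 hg (good_pow _ hx)).
    by rewrite cj_pow // ecj /gen_a gpow_tone mul1n modnn.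
  move=> m /andP[m0 mp] h.
  have := gpow_snd (t, 1%N) m; rewrite h /= mul1n modn_small //.
  by move=> h0; move: m0; rewrite -h0.
exists (emb s); first by split; [exact: p_gt0|].
move=> y; split.
  case=> w [m [->|->]] ->.
    by rewrite -[gmul (gmul _ _) _]/(cj _ _) cj_pow // ecj; exists m; left.
  by rewrite -[gmul (gmul _ _) _]/(cj _ _) cj_pow ?cj_inv ?ecj //; [exists m; right | apply: good_inv].
case=> m [->|->].
  exists (gpow (t, 1%N) m); first by exists m; left.
  by rewrite -[gmul (gmul _ _) _]/(cj _ _) cj_pow // ecj.
exists (gpow (ginv (t, 1%N)) m); first by exists m; right.
by rewrite -[gmul (gmul _ _) _]/(cj _ _) cj_pow ?cj_inv ?ecj //; apply: good_inv.
Qed.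

Definition th : R := 2 * pi / p%:R.
Lemma xi_pow m : xi R p ^+ m = Complex (cos (m%:R * th)) (sin (m%:R * th)).
Proof.
elim: m => [|m IH].
  by rewrite expr0 mul0r cos0 sin0.
rewrite exprS IH /xi -/th.
have -> : (m.+1%:R * th = th + m%:R * th) by rewrite mulrS mulrDl mul1r.
rewrite cosD sinD /=; congr Complex; ring.
Qed.

Lemma xi_p : xi R p ^+ p = 1.
Proof.
rewrite xi_pow.
have -> : p%:R * th = pi *+ 2.
  rewrite /th mulrC divfK; first by rewrite mulr_natl.
  by rewrite pnatr_eq0 -lt0n p_gt0.
by rewrite cos2pi sin2pi.
Qed.

Lemma xi_neq1 : xi R p != 1.
Proof.
apply/eqP; rewrite /xi -/th => h.
have [h1 h2] : cos th = 1 /\ sin th = 0 by case: h.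
case: (ltngtP p 2) => hp2.
- by have := p_gt1; lia.
- have hpi := pi_gt0 R.
  have p0 : (0 < p%:R :> R) by rewrite ltr0n p_gt0.
  have : 0 < sin th.
    apply: sin_gt0_pi; apply/andP; split.
      by rewrite /th divr_gt0 // mulr_gt0.
    rewrite /th ltr_pdivrMr //.
    have : (2 < p%:R :> R) by rewrite ltr_nat.
    move=> h3; nra.
  by rewrite h2 ltxx.
- move: h1; rewrite /th hp2.
  have -> : (2 : R) * pi / 2%:R = pi by rewrite mulrAC divff ?mul1r // pnatr_eq0.
  rewrite cospi => e; clear h; lra.
Qed.

Lemma xi_prim : p.-primitive_root (xi R p).
Proof.
have [m hm hmp] := prim_order_exists p_gt0 xi_p.
have /primeP [_ hd] := hp.
case/orP: (hd m hmp) => /eqP e; last by move: hm; rewrite e.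
exfalso; move: hm; rewrite e => hm.
have := prim_expr_order hm; rewrite expr1 => h.
by move: xi_neq1; rewrite h eqxx.
Qed.

Definition W (w : C) : tup := [tuple w ^+ (val j).+1 | j < p.-1].
Lemma nth_W w j : (j < p.-1)%N -> (W w)`_j = w ^+ j.+1.
Proof. by move=> hj; rewrite /W (nth_mk _ _ hj). Qed.

Lemma rho_W w : w ^+ p = 1 -> rho (W w) = W w.
Proof.
move=> hw; have h1 := p_gt1.
have w0 : w != 0.
  by apply/eqP => e; move: hw; rewrite e expr0n gtn_eqF ?p_gt0 //= => /esym/eqP; rewrite oner_eq0.
have hl : (W w)`_(p.-2) = w^-1.
  rewrite nth_W; last lia.
  have e : w ^+ p = w * w ^+ (p.-2).+1 by rewrite -exprS; congr (_ ^+ _); lia.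
  apply: (@mulfI _ w) => //; rewrite -e hw divff //.
apply: (@tuple_ext _ 0) => j hj.
rewrite nth_rho // hl invrK.
case: j hj => [|j] hj.
  by rewrite eqxx mul1r nth_W // expr1.
have -> : (j.+1 == 0%N) = false by [].
rewrite (nth_W w hj) (@nth_W w j); last lia.
by rewrite -exprSr.
Qed.

Lemma iter_W m w : w ^+ p = 1 -> iter m (@rho R _) (W w) = W w.
Proof. by move=> hw; elim: m => //= m ->; rewrite rho_W. Qed.

Lemma W_mul w v : tmul (W w) (W v) = W (w * v).
Proof. apply: (@tuple_ext _ 0) => j hj; by rewrite nth_tmul // !nth_W // exprMn. Qed.

Lemma W1 : W 1 = tone R p.-1.
Proof. apply: (@tuple_ext _ 0) => j hj; by rewrite nth_W // nth_tone // expr1n. Qed.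

Lemma gpow_W w m : gpow (W w, 0%N) m = (W (w ^+ m), 0%N).
Proof.
elim: m => [|m IH] /=; first by rewrite expr0 W1.
by rewrite IH /gmul /= W_mul exprS mod0n.
Qed.

Lemma tinv_W w : tinv (W w) = W w^-1.
Proof. apply: (@tuple_ext _ 0) => j hj; by rewrite nth_tinv // !nth_W // exprVn. Qed.

Lemma nz_W w : w != 0 -> nz (W w).
Proof.
move=> w0 k; rewrite /U; case: ifP => hk; first exact: oner_neq0.
have hj : ((k %% p).-1 < p.-1)%N.
  have := ltn_pmod k p_gt0; move/negbT: hk; lia.
by rewrite nth_W // expf_neq0.
Qed.

Lemma ginv_W w : w != 0 -> ginv (W w, 0%N) = (W w^-1, 0%N).
Proof.
move=> w0; rewrite /ginv /= subn0 modnn tinv_W iter_p //.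
by apply: nz_W; rewrite invr_eq0.
Qed.

Lemma zetaE : zeta R p = (W (xi R p), 0%N).
Proof. by []. Qed.

Lemma centre_fixed t : all (@inT R) t -> rho t = t -> centre (t, 0%N).
Proof.
move=> ht e; split; first by split; [exact: p_gt0|].
case=> s m [/= hm hs]; rewrite /gmul /=; apply: pairE.
  have -> : iter m (@rho R _) t = t by elim: m {hm} => //= m ->.
  by rewrite tmulC.
by rewrite addn0.
Qed.

Lemma allT_W w : w ^+ p = 1 -> all (@inT R) (W w).
Proof.
move=> hw; have nw := norm1_pow p_gt0 hw.
by apply: allT_of => j hj; rewrite nth_W // normrX nw expr1n.
Qed.

Lemma centre_W w : w ^+ p = 1 -> centre (W w, 0%N).
Proof. by move=> hw; apply: centre_fixed; [exact: allT_W | exact: rho_W]. Qed.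

Lemma xi_nz : xi R p != 0.
Proof. by apply/eqP => e; move: xi_p; rewrite e expr0n gtn_eqF ?p_gt0 //= => /esym/eqP; rewrite oner_eq0. Qed.

Lemma cyc_zeta_centre x : cyc (zeta R p) x -> centre x.
Proof.
case=> m [->|->]; rewrite zetaE.
  by rewrite gpow_W; apply: centre_W; rewrite -exprM mulnC exprM xi_p expr1n.
rewrite ginv_W ?xi_nz // gpow_W; apply: centre_W.
by rewrite -exprM mulnC exprM exprVn xi_p invr1 expr1n.
Qed.

Definition ii : C := Complex 0 1.
Lemma ii2 : ii * ii = -1.
Proof.
have -> : ii * ii = Complex (0*0 - 1*1) (0*1 + 1*0) by [].
have -> : (-1 : C) = Complex (-1) (-0) by [].
congr Complex; ring.
Qed.
Lemma m1n1 : (-1 : C) != 1.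
Proof.
apply/eqP => e. have : (2%:R : C) = 0. by rewrite -[2]/(1+1) -{1}e addNr.
by move/eqP; rewrite pnatr_eq0.
Qed.
Lemma norm_ii : `|ii| = 1.
Proof.
apply: (@norm1_pow _ 4) => //.
by rewrite exprS exprS expr2 mulrA ii2 mulN1r opprK.
Qed.

Definition s0 : tup := [tuple (if val j == 0%N then ii else 1) | j < p.-1].
Lemma Us0 k : U s0 k = if (k %% p == 1)%N then ii else 1.
Proof.
rewrite /U; case: ifP => hk.
  by rewrite (eqP hk).
have hj : ((k %% p).-1 < p.-1)%N.
  have := ltn_pmod k p_gt0; move/negbT: hk; lia.
rewrite /s0 (nth_mk _ _ hj) /=.
have -> : (((k %% p).-1 == 0) = (k %% p == 1))%N by move/negbT: hk; case: (k %% p)%N => [|[]].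
by [].
Qed.
Lemma allT_s0 : all (@inT R) s0.
Proof.
apply: allT_of => j hj; rewrite /s0 (nth_mk _ _ hj) /=.
by case: (j == 0)%N; rewrite ?norm_ii ?normr1.
Qed.

Lemma centre_snd x : centre x -> x.2 = 0%N.
Proof.
case: x => t k [[/= hk ht] hc] /=.
apply/eqP; apply: contraT => k0.
have hy : inGamma (s0, 0%N) by split; [exact: p_gt0 | exact: allT_s0].
have e1 : tmul t (iter k (@rho R _) s0) = tmul s0 (iter 0 (@rho R _) t) := congr1 fst (hc _ hy).
have tz := allT_nz ht.
have : U (iter k (@rho R _) s0) 1 = U s0 1.
  have := congr1 (fun r => U r 1) e1; rewrite /= !Utmul mulrC.
  by move/mulIf; apply; apply: tz.
rewrite Uiter; last exact: allT_nz allT_s0.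
set X := (p.-1 * k)%N.
have hX : (X %% p == 0)%N = false.
  apply/negbTE; rewrite -/(dvdn p X) Euclid_dvdM // negb_or.
  have h1 := p_gt1.
  apply/andP; split; apply/negP => /dvdn_leq; lia.
have h1X : ((1 + X) %% p == 1)%N = false.
  apply/negbTE; apply/negP => /eqP e.
  have : (1 + X = 1 + 0 %[mod p])%N by rewrite e addn0 modn_small //; exact: p_gt1.
  by move/eqP; rewrite eqn_modDl mod0n hX.
have h11 : (1 %% p == 1)%N by rewrite modn_small //; exact: p_gt1.
rewrite !Us0 h1X h11; case: ifP => _.
  move=> e; have : ii * ii = 1 by rewrite -{1}e mul1r mulVf // -normr_eq0 norm_ii oner_neq0.
  by rewrite ii2 => /eqP; rewrite (negbTE m1n1).
rewrite divr1 => e; have : ii * ii = 1 by rewrite -e mulr1.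
by rewrite ii2 => /eqP; rewrite (negbTE m1n1).
Qed.

Lemma centre_rho x : centre x -> rho x.1 = x.1 /\ all (@inT R) x.1.
Proof.
move=> hc; have k0 := centre_snd hc.
case: x hc k0 => t k [[/= hk ht] hc] /= k0; subst k; split => //.
have e1 : tmul t (iter 0 (@rho R _) (tone R p.-1)) = tmul (tone R p.-1) (iter 1 (@rho R _) t)
  := congr1 fst (hc _ inGamma_a).
by move: e1; rewrite /= tmul1 tmul1l.
Qed.

Lemma fixed_W t : nz t -> rho t = t -> exists2 w, w ^+ p = 1 & t = W w.
Proof.
move=> tz e; have h1 := p_gt1.
have tnz : forall j, (j < p.-1)%N -> t`_j != 0.
  by move=> j hj; rewrite -Unth //.
pose d := t`_0.
have hd : d = (t`_(p.-2))^-1.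
  by rewrite /d -{1}e nth_rho ?eqxx ?mul1r //; lia.
have ht : forall j, (j < p.-1)%N -> t`_j = d ^+ j.+1.
  elim=> [|j IH] hj; first by rewrite expr1.
  rewrite -{1}e nth_rho // /= IH; last lia.
  by rewrite -hd -exprSr.
have hl : t`_(p.-2) = d ^+ p.-1.
  by rewrite ht; [congr (_ ^+ _); lia | lia].
exists d.
  have e2 : d * t`_(p.-2) = 1 by rewrite hd mulVf // tnz //; lia.
  by rewrite hl -exprS in e2; rewrite -e2; congr (_ ^+ _); lia.
by apply: (@tuple_ext _ 0) => j hj; rewrite nth_W // ht.
Qed.

Lemma part2 x : centre x <-> cyc (zeta R p) x.
Proof.
split; last exact: cyc_zeta_centre.
move=> hc; have k0 := centre_snd hc; have [e ht] := centre_rho hc.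
have [w hw et] := fixed_W (allT_nz ht) e.
have [i hi] := prim_rootP xi_prim hw.
exists i; left; rewrite zetaE gpow_W -hi -et -k0.
by case: x {hc k0 e ht et}.
Qed.

Lemma cj_fix w k j : nz w -> rho w = w -> (j < p)%N -> (k < p)%N ->
  cj (w, k) (tone R p.-1, j) = (tone R p.-1, j).
Proof.
move=> wz e hj hk.
have ei : forall m, iter m (@rho R _) (tinv w) = tinv w.
  by elim=> //= m ->; rewrite rho_tinv // e.
rewrite /cj /gmul /ginv /=; apply: pairE.
  by rewrite iter_tone tmul1 !ei tmulV.
rewrite modnDm; have -> : (k + j + (p - k) = j + p)%N by lia.
by rewrite modnDr modn_small.
Qed.

Lemma part3 g : normaliser (cyc (gen_a R p)) g <->
        exists z c, centre z /\ cyc (gen_a R p) c /\ g = gmul z c.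
Proof.
split.
  case: g => t k [[/= hk ht] hn].
  have tz := allT_nz ht.
  have ha : cyc (gen_a R p) (gen_a R p).
    by apply/cyc_aP; exists 1%N => //; exact: p_gt1.
  have : cyc (gen_a R p) (cj (t, k) (gen_a R p)) by apply/hn; exists (gen_a R p).
  case/cyc_aP => j hj e.
  have e1 := congr1 fst e; rewrite /cj /gmul /ginv /gen_a /= in e1.
  move: e1; rewrite iter_tone tmul1 iter_mod; last by apply: nz_iter; apply: nz_tinv.
  rewrite -iterD.
  have -> : ((k + 1) + (p - k) = 1 + p)%N by rewrite addnAC subnKC ?addn1 ?add1n // ltnW.
  rewrite iterD iter_p; last exact: nz_tinv.
  rewrite /= rho_tinv // => e1.
  have er : rho t = t.
    have := congr1 (fun r => tmul r (rho t)) e1.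
    rewrite tmul1l -tmulA tmulVl ?tmul1 //; exact: nz_rho.
  exists (t, 0%N), (tone R p.-1, k); split; first exact: centre_fixed.
  split; first by apply/cyc_aP; exists k.
  rewrite /gmul /=; apply: pairE; first by rewrite tmul1.
  by rewrite add0n modn_small.
case=> z [c [hz [hc ->]]].
have k0 := centre_snd hz; have [e ht] := centre_rho hz.
case/cyc_aP: hc => k hk ->.
case: z hz k0 e ht => w m hz /= k0 e ht; subst m.
have -> : gmul (w, 0%N) (tone R p.-1, k) = (w, k).
  rewrite /gmul /=; apply: pairE; first by rewrite tmul1.
  by rewrite add0n modn_small.
have wz := allT_nz ht.
split; first by split.
move=> y; split.
  case=> x hx ->.
  by case/cyc_aP: hx => j hj ->; rewrite -[gmul (gmul _ _) _]/(cj _ _) cj_fix //; apply/cyc_aP; exists j.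
move=> hy; have hy' := hy; case/cyc_aP: hy => j hj ey.
by exists y => //; rewrite ey -[gmul (gmul _ _) _]/(cj _ _) cj_fix.
Qed.

Lemma part4 x : centre x -> cyc (gen_a R p) x -> x = gone R p.
Proof.
move=> hz; have k0 := centre_snd hz.
by case/cyc_aP => k hk ex; move: k0; rewrite ex /= => ->.
Qed.
End X.

Theorem lemma3p4 (R : realType) (p : nat) (hp : prime p) :
  (* (1) *)
  (forall t : (p.-1).-tuple R[i], all (@inT R) t ->
     has_order (gmul (emb t) (gen_a R p)) p /\
     exists2 g, inGamma g &
       forall y, conjset g (cyc (gmul (emb t) (gen_a R p))) y <-> cyc (gen_a R p) y)
  (* (2) *)
  /\ (forall x, @centre R p x <-> cyc (zeta R p) x)
  (* (3) : N(C_p) = Z(Gamma_p) x C_p, an internal direct product *)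
  /\ (forall g, normaliser (cyc (gen_a R p)) g <->
        exists z c, @centre R p z /\ cyc (gen_a R p) c /\ g = gmul z c)
  /\ (forall x, @centre R p x -> cyc (gen_a R p) x -> x = @gone R p).
Proof.
split; first exact: part1.
split; first exact: part2.
split; first exact: part3.
exact: part4.
Qed.
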